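(* Let $\mathcal{X}$ be a convex subset of a normed space with norm $\|\cdot\|$, dual norm $\|\cdot\|_*$. For each $x\in\mathcal{X}$ let $d_x$ be a distribution on a sample space $\mathcal{S}$ and let $f(\cdot;s)$ be $\alpha$-strongly convex and differentiable on $\mathcal{X}$ for each $s$. Let $F(y,x)=\mathbb{E}_{s\sim d_y}[f(x;s)]$ and assume $\|\nabla_2F(x,z)-\nabla_2F(y,z)\|_*\le\beta\|x-y\|$ for all $x,y,z$. Given $x_1$, at iteration $n$ draw samples $s_{n,1},\dots,s_{n,m_n}$ from $d_{x_n}$, let $g_n(x)=\frac1{m_n}\sum_{k=1}^{m_n}f(x;s_{n,k})$, $f_n(x)=F(x_n,x)$, and $x_{n+1}=\arg\min_{x\in\mathcal{X}}\sum_{k=1}^ng_k(x)$. Let $\xi_n=\nabla f_n-\nabla g_n$, $\bar\xi_{n}=\frac1n\sum_{k=1}^n\xi_k$, $\theta=\beta/\alpha$, and $S_n=\frac1{n-1}\sum_{k=1}^{n-1}\|x_n-x_k\|$. Then for all $n\ge2$, $$\|x_{n+1}-x_n\|\le\frac{\theta S_n}{n}+\frac{1}{n\alpha}\left(\|\xi_n(x_n)\|_*+\|\bar\xi_{n-1}(x_n)\|_*\right).$$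
   Context: This is the stochastic (finite-sample) version of the value aggregation algorithm AggreVaTe; minimizers are assumed to exist. $\nabla_2$ denotes the gradient in the second argument. *)

(* Defs.v *)
From HB Require Import structures.
From mathcomp Require Import all_boot all_order all_algebra.
From mathcomp Require Import all_classical all_reals all_analysis.
Set Implicit Arguments. Unset Strict Implicit. Unset Printing Implicit Defensive.
Import Order.TTheory GRing.Theory Num.Theory.
Import numFieldNormedType.Exports.
Local Open Scope classical_set_scope.
Local Open Scope ring_scope.

Definition convex_subset (R : realType) (V : normedModType R) (X : set V) :=
  forall x y (t : R), X x -> X y -> 0 <= t <= 1 -> X (t *: x + (1 - t) *: y).

Definition dual_norm (R : realType) (V : normedModType R) (L : V -> R) : R :=
  sup [set `|L v| | v in [set v : V | `|v| <= 1]].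

(* alpha-strong convexity of a differentiable function on X (gradient form),
   the gradient at x being the Frechet differential 'd f x. *)
Definition strongly_convex_on (R : realType) (V : normedModType R)
  (alpha : R) (X : set V) (f : V -> R) :=
  forall x y, X x -> X y ->
    f x + 'd f x (y - x) + alpha / 2 * `|y - x| ^+ 2 <= f y.

Definition Fexp (R : realType) (V : normedModType R) (dS : measure_display)
  (S : measurableType dS) (d : V -> probability S R) (f : S -> V -> R)
  (y x : V) : R :=
  fine (\int[d y]_s (f s x)%:E)%E.

Definition gsamp (R : realType) (V : normedModType R) (S : Type)
  (f : S -> V -> R) (m : nat -> nat) (s : nat -> nat -> S) (n : nat) (x : V) : R :=
  (m n)%:R^-1 * \sum_(1 <= k < (m n).+1) f (s n k) x.

Definition xi (R : realType) (V : normedModType R) (dS : measure_display)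
  (S : measurableType dS) (d : V -> probability S R) (f : S -> V -> R)
  (m : nat -> nat) (s : nat -> nat -> S) (x : nat -> V) (n : nat) (z : V) : V -> R :=
  fun v => 'd (Fexp d f (x n)) z v - 'd (gsamp f m s n) z v.

Definition xibar (R : realType) (V : normedModType R) (dS : measure_display)
  (S : measurableType dS) (d : V -> probability S R) (f : S -> V -> R)
  (m : nat -> nat) (s : nat -> nat -> S) (x : nat -> V) (n : nat) (z : V) : V -> R :=
  fun v => n%:R^-1 * \sum_(1 <= k < n.+1) xi d f m s x k z v.

Definition Savg (R : realType) (V : normedModType R) (x : nat -> V) (n : nat) : R :=
  (n.-1)%:R^-1 * \sum_(1 <= k < n) `|x n - x k|.

(* Main.v *)
Require Import Defs.
From HB Require Import structures.
From mathcomp Require Import all_boot all_order all_algebra.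
From mathcomp Require Import all_classical all_reals all_analysis.
From mathcomp Require Import ring lra.
Import Order.TTheory GRing.Theory Num.Theory.
Import numFieldNormedType.Exports.
Local Open Scope classical_set_scope.
Local Open Scope ring_scope.

Section Helpers.
Context {R : realType} {V : normedModType R}.

Lemma dual_bound (L : V -> R) r : 0 <= r ->
  (forall c v, L (c *: v) = c * L v) -> (forall v, `|L v| <= r * `|v|) ->
  (0 <= dual_norm L) /\ forall v, `|L v| <= dual_norm L * `|v|.
Proof.
move=> r0 hom bnd.
have L0 : L 0 = 0 by rewrite -(scale0r (0:V)) hom mul0r.
have ub : has_ubound [set `|L v| | v in [set v : V | `|v| <= 1]].
  exists r => _ [v /= v1 <-]; apply: (le_trans (bnd v)).
  by rewrite -[leRHS]mulr1 ler_wpM2l.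
have sup_ub := ub_le_sup ub.
split.
  have := sup_ub `|L 0| _; rewrite L0 normr0; apply.
  exists 0; first by rewrite /= normr0.
  by rewrite L0 normr0.
move=> v; have [->|v0] := eqVneq v 0; first by rewrite L0 !normr0 mulr0.
have nv : 0 < `|v| by rewrite normr_gt0.
have hA : [set `|L v| | v in [set v : V | `|v| <= 1]] `|L (`|v|^-1 *: v)|.
  exists (`|v|^-1 *: v) => //=.
  by rewrite /= normrZ normfV normr_id mulVf ?gt_eqF.
have := sup_ub _ hA.
rewrite hom normrM normfV normr_id.
move=> h; have := ler_wpM2l (ltW nv) h.
by rewrite mulrA mulfV ?gt_eqF // mul1r mulrC.
Qed.

Lemma diff_bnd (g : V -> R) z : differentiable g z ->
  exists2 r, 0 <= r & forall v, `|'d g z v| <= r * `|v|.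
Proof.
move=> dg.
have c : continuous ('d g z) by exact: diff_continuous.
have := @continuous_linear_bounded R V R^o 0 ('d g z) (c 0).
move=> /linear_boundedP /pinfty_ex_gt0 [r r0 H]; exists r => //; exact: ltW.
Qed.

Lemma fo (g : V -> R) z v : differentiable g z ->
  (forall t, 0 < t < 1 -> g z <= g (z + t *: v)) -> 0 <= 'd g z v.
Proof.
move=> dg hmin.
rewrite -deriveE //.
have dv := @diff_derivable R V R^o g z v dg.
have cv : (fun h : R => h^-1 *: ((g \o shift z) (h *: v) - g z)) @ 0^' --> 'D_v g z.
  exact: dv.
have := cvg_dnbhs_at_right cv.
move=> /cvgr_to_ge; apply.
near=> h.
have hp : 0 < h by near: h; exact: nbhs_right_gt.
have h1 : h < 1 by near: h; exact: nbhs_right_lt.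
rewrite /= -[_ *: _]/(h^-1 * _); apply: mulr_ge0; first by rewrite invr_ge0 ltW.
rewrite subr_ge0 addrC.
by apply: hmin; rewrite hp h1.
Unshelve. all: by end_near. Qed.

End Helpers.

Section H2.
Context {R : realType} {V : normedModType R}.

Definition BH (L : V -> R) := (forall c v, L (c *: v) = c * L v) /\
  exists2 r, 0 <= r & forall v, `|L v| <= r * `|v|.

Lemma BH_diff (g : V -> R) z : differentiable g z -> BH ('d g z).
Proof.
move=> dg; split; first by move=> c v; rewrite linearZ.
exact: diff_bnd.
Qed.

Lemma BH_sub L1 L2 : BH L1 -> BH L2 -> BH (fun v => L1 v - L2 v).
Proof.
move=> [h1 [r1 r10 b1]] [h2 [r2 r20 b2]]; split.
  by move=> c v; rewrite h1 h2 mulrBr.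
exists (r1 + r2); first exact: addr_ge0.
move=> v; apply: le_trans (ler_normB _ _) _.
by rewrite mulrDl lerD.
Qed.

Lemma BH_scale c L : BH L -> BH (fun v => c * L v).
Proof.
move=> [h [r r0 b]]; split; first by move=> a v; rewrite h mulrCA.
exists (`|c| * r); first by rewrite mulr_ge0.
by move=> v; rewrite normrM -mulrA ler_wpM2l.
Qed.

Lemma BH_sum (I : eqType) (rr : seq I) (F : I -> V -> R) :
  (forall i, i \in rr -> BH (F i)) -> BH (fun v => \sum_(i <- rr) F i v).
Proof.
elim: rr => [|a rr IH] hF.
  split; first by move=> c v; rewrite !big_nil mulr0.
  by exists 0 => // v; rewrite big_nil normr0 mul0r.
have [IHh [r r0 IHb]] := IH (fun i ir => hF i (mem_behead (s:=a :: rr) ir)).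
have [ha [ra ra0 hb]] := hF a (mem_head _ _).
split; first by move=> c v; rewrite !big_cons ha IHh mulrDr.
exists (ra + r); first exact: addr_ge0.
move=> v; rewrite big_cons; apply: le_trans (ler_normD _ _) _.
by rewrite mulrDl lerD.
Qed.

Lemma BH_dual L : BH L -> 0 <= dual_norm L /\ forall v, `|L v| <= dual_norm L * `|v|.
Proof. by move=> [h [r r0 b]]; exact: (@dual_bound R V L r r0 h b). Qed.

Lemma diff_bigsum (I : Type) (F : I -> V -> R) (rr : seq I) z :
  (forall i, differentiable (F i) z) ->
  differentiable (fun y => \sum_(i <- rr) F i y) z /\
  forall v, 'd (fun y => \sum_(i <- rr) F i y) z v = \sum_(i <- rr) 'd (F i) z v.
Proof.
move=> dF; elim: rr => [|a rr [IHd IHv]].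
  have -> : (fun y => \sum_(i <- [::]) F i y) = cst 0.
    by apply/funext => y; rewrite big_nil.
  split; first exact: differentiable_cst.
  by move=> v; rewrite diff_cst big_nil.
have -> : (fun y => \sum_(i <- a :: rr) F i y) = F a + (fun y => \sum_(i <- rr) F i y).
  by apply/funext => y; rewrite big_cons.
split; first exact: differentiableD.
by move=> v; rewrite diffD // big_cons /= IHv.
Qed.

Lemma diff_scale (g : V -> R) (c : R) z : differentiable g z ->
  differentiable (fun y => c * g y) z /\
  forall v, 'd (fun y => c * g y) z v = c * 'd g z v.
Proof.
move=> dg.
have -> : (fun y => c * g y) = c *: g by apply/funext.
split; first exact: differentiableZ.
by move=> v; rewrite diffZ.
Qed.

End H2.

Section H3.
Variables (R : realType) (V : normedModType R) (Sm : Type) (f : Sm -> V -> R)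
  (m : nat -> nat) (s : nat -> nat -> Sm).

Lemma gsamp_diff k z : (forall sv, differentiable (f sv) z) ->
  differentiable (gsamp f m s k) z /\
  forall v, 'd (gsamp f m s k) z v =
     (m k)%:R^-1 * \sum_(1 <= j < (m k).+1) 'd (f (s k j)) z v.
Proof.
move=> df.
have [d1 e1] := @diff_bigsum R V nat (fun j => f (s k j)) (index_iota 1 (m k).+1) z (fun j => df (s k j)).
have [d2 e2] := @diff_scale R V _ (m k)%:R^-1 z d1.
rewrite /gsamp; split; first exact: d2.
by move=> v; rewrite e2 e1.
Qed.

Lemma gsamp_sc (X : set V) alpha k z y : (0 < m k)%N ->
  (forall sv, differentiable (f sv) z) ->
  (forall sv, strongly_convex_on alpha X (f sv)) -> X z -> X y ->
  gsamp f m s k z + 'd (gsamp f m s k) z (y - z) + alpha / 2 * `|y - z| ^+ 2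
   <= gsamp f m s k y.
Proof.
move=> mk df sc Xz Xy.
have [_ e] := gsamp_diff k z df.
rewrite e /gsamp.
set c := (m k)%:R^-1.
have c1 : c * (m k)%:R = 1 by rewrite mulVf // pnatr_eq0 -lt0n.
have c0 : 0 <= c by rewrite invr_ge0.
have -> : alpha / 2 * `|y - z| ^+ 2 =
   c * \sum_(1 <= j < (m k).+1) (alpha / 2 * `|y - z| ^+ 2).
  by rewrite sumr_const_nat subn1 /= -[_ *+ m k]mulr_natl -!mulrA (mulrA c) c1 mul1r ?mulrA.
rewrite -!mulrDr; apply: ler_wpM2l => //.
rewrite -!big_split /=; apply: ler_sum => j _.
exact: sc.
Qed.

Definition Gs N := fun y => \sum_(1 <= k < N.+1) gsamp f m s k y.

Lemma Gs_diff N z : (forall sv, differentiable (f sv) z) ->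
  differentiable (Gs N) z /\
  forall v, 'd (Gs N) z v = \sum_(1 <= k < N.+1) 'd (gsamp f m s k) z v.
Proof.
move=> df; apply: diff_bigsum => k.
by have [] := gsamp_diff k z df.
Qed.

Lemma Gs_sc (X : set V) alpha N z y : (forall k, (0 < m k)%N) ->
  (forall sv, differentiable (f sv) z) ->
  (forall sv, strongly_convex_on alpha X (f sv)) -> X z -> X y ->
  Gs N z + \sum_(1 <= k < N.+1) 'd (gsamp f m s k) z (y - z)
   + N%:R * (alpha / 2 * `|y - z| ^+ 2) <= Gs N y.
Proof.
move=> mk df sc Xz Xy.
have -> : N%:R * (alpha / 2 * `|y - z| ^+ 2) =
   \sum_(1 <= k < N.+1) (alpha / 2 * `|y - z| ^+ 2).
  by rewrite sumr_const_nat subn1 /= mulr_natl.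
rewrite /Gs -!big_split /=; apply: ler_sum => k _.
exact: gsamp_sc.
Qed.

End H3.

Theorem lemma11 (R : realType) (V : normedModType R) (X : set V)
  (dS : measure_display) (S : measurableType dS)
  (d : V -> probability S R) (f : S -> V -> R) (alpha beta : R)
  (m : nat -> nat) (s : nat -> nat -> S) (x : nat -> V) :
  convex_subset X ->
  0 < alpha ->
  (forall sv, forall z, X z -> differentiable (f sv) z) ->
  (forall sv, strongly_convex_on alpha X (f sv)) ->
  (forall y z, X y -> X z -> differentiable (Fexp d f y) z) ->
  (forall y1 y2 z, X y1 -> X y2 -> X z ->
     dual_norm (fun v => 'd (Fexp d f y1) z v - 'd (Fexp d f y2) z v)
       <= beta * `|y1 - y2|) ->
  (forall n, (0 < m n)%N) ->
  X (x 1%N) ->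
  (forall n, (1 <= n)%N ->
     X (x n.+1) /\
     forall y, X y -> \sum_(1 <= k < n.+1) gsamp f m s k (x n.+1)
                      <= \sum_(1 <= k < n.+1) gsamp f m s k y) ->
  forall n, (2 <= n)%N ->
    `|x n.+1 - x n| <=
      (beta / alpha) * Savg x n / n%:R
      + (n%:R * alpha)^-1 *
        (dual_norm (xi d f m s x n (x n)) + dual_norm (xibar d f m s x n.-1 (x n))).
Proof.
move=> cvx a0 dfX sc dF hb mk X1 hmin n n2.
have Xk : forall k, (1 <= k)%N -> X (x k).
  case=> [//|k]; case: k => [_|k _]; first exact: X1.
  exact: (hmin k.+1 isT).1.
case: n n2 => [//|n'] n2.
have n1 : (1 <= n')%N by [].
set n := n'.+1.
set z := x n; set w := x n.+1.
have Xz : X z by exact: Xk.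
have Xw : X w by exact: Xk.
have dz : forall sv, differentiable (f sv) z := fun sv => dfX sv z Xz.
have dw : forall sv, differentiable (f sv) w := fun sv => dfX sv w Xw.
have cvxE : forall (p q : V) t, p + t *: (q - p) = t *: q + (1 - t) *: p.
  by move=> p q t; rewrite scalerBr scalerBl scale1r addrCA addrC.
have hi := @Gs_sc R V S f m s X alpha n z w mk dz sc Xz Xw.
have hii := @Gs_sc R V S f m s X alpha n w z mk dw sc Xw Xz.
have hiii : 0 <= \sum_(1 <= k < n.+1) 'd (gsamp f m s k) w (z - w).
  have [dG eG] := @Gs_diff R V S f m s n w dw.
  rewrite -eG; apply: fo => // t /andP[t0 t1].
  rewrite cvxE; apply: (hmin n isT).2; apply: cvx => //.
  by rewrite ltW // ltW.
have hiv : 0 <= \sum_(1 <= k < n'.+1) 'd (gsamp f m s k) z (w - z).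
  have [dG eG] := @Gs_diff R V S f m s n' z dz.
  rewrite -eG; apply: fo => // t /andP[t0 t1].
  rewrite cvxE; apply: (hmin n' n1).2; apply: cvx => //.
  by rewrite ltW // ltW.
set D := `|w - z|.
have Dzw : `|z - w| = D by rewrite /D distrC.
rewrite Dzw in hii.
set P := \sum_(1 <= k < n'.+1) 'd (gsamp f m s k) z (w - z) in hiv.
set dn := 'd (gsamp f m s n) z (w - z).
have core : n%:R * alpha * D ^+ 2 <= - (P + dn).
  move: hi; rewrite big_nat_recr //= -/P -/dn => hi.
  have : n%:R * alpha * D ^+ 2 <= - (P + dn)
          - \sum_(1 <= k < n.+1) 'd (gsamp f m s k) w (z - w).
    move: hi hii hiii; set Q := \sum_(1 <= k < n.+1) _.
    move=> hi hii hiii; rewrite -/D in hi.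
    have -> : n%:R * alpha * D ^+ 2 = 2 * (n%:R * (alpha / 2 * D ^+ 2)).
      by field.
    move: hi hii; set E := n%:R * (alpha / 2 * D ^+ 2); lra.
  move=> h; apply: le_trans h _; lra.
have Xn : X (x n) by exact: Xz.
set Fk := fun k => 'd (Fexp d f (x k)) z (w - z).
have gd : forall k, differentiable (gsamp f m s k) z.
  by move=> k; have [] := @gsamp_diff R V S f m s k z dz.
have BHxi : forall k, (1 <= k)%N -> BH (xi d f m s x k z).
  move=> k k1; apply: BH_sub; apply: BH_diff => //; exact: dF (Xk k k1) Xz.
have [N1p B1] := BH_dual _ (BHxi n isT).
have BHxb : BH (xibar d f m s x n.-1 z).
  rewrite /xibar; apply: BH_scale; apply: BH_sum => k.
  by rewrite mem_index_iota => /andP[k1 _]; exact: BHxi.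
have [N2p B2] := BH_dual _ BHxb.
set N1 := dual_norm (xi d f m s x n z) in N1p B1 *.
set N2 := dual_norm (xibar d f m s x n.-1 z) in N2p B2 *.
have B3 : forall k, (1 <= k)%N -> Fk k - Fk n <= beta * `|x n - x k| * D.
  move=> k k1.
  have hbk := hb (x n) (x k) z Xn (Xk k k1) Xz.
  have BHk : BH (fun v => 'd (Fexp d f (x n)) z v - 'd (Fexp d f (x k)) z v).
    by apply: BH_sub; apply: BH_diff; apply: dF => //; exact: Xk.
  have [_ Bk] := BH_dual _ BHk.
  have e1 : Fk k - Fk n <= `|Fk n - Fk k| by rewrite -normrN opprB ler_norm.
  apply: le_trans e1 _; apply: le_trans (Bk (w - z)) _.
  by rewrite -/D; apply: ler_wpM2r => //; rewrite /D normr_ge0.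
have B4 : forall k, (1 <= k)%N -> 0 <= beta * `|x n - x k|.
  move=> k k1.
  have hbk := hb (x n) (x k) z Xn (Xk k k1) Xz.
  have BHk : BH (fun v => 'd (Fexp d f (x n)) z v - 'd (Fexp d f (x k)) z v).
    by apply: BH_sub; apply: BH_diff; apply: dF => //; exact: Xk.
  have [Bk0 _] := BH_dual _ BHk.
  exact: le_trans Bk0 hbk.
set T := \sum_(1 <= k < n'.+1) beta * `|x n - x k|.
have T0 : 0 <= T.
  rewrite /T big_nat; apply: sumr_ge0 => k /andP[k1 _]; exact: B4.
set c := n'%:R^-1 : R.
have c0 : 0 <= c by rewrite invr_ge0.
have cn : c * n'%:R = 1 by rewrite mulVf // pnatr_eq0 -lt0n.
have SavgE : beta * Savg x n = c * T.
  by rewrite /Savg /T -mulr_sumr mulrCA.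
set SF := \sum_(1 <= k < n'.+1) Fk k.
have sumB : SF - Fk n * n'%:R <= T * D.
  have -> : SF - Fk n * n'%:R = \sum_(1 <= k < n'.+1) (Fk k - Fk n).
    by rewrite sumrB sumr_const_nat subn1 mulr_natr.
  rewrite /T mulr_suml big_nat [X in _ <= X]big_nat; apply: ler_sum => k /andP[k1 _].
  exact: B3.
have xiE : xi d f m s x n z (w - z) = Fk n - dn by [].
have xibE : xibar d f m s x n.-1 z (w - z) = c * (SF - P).
  by rewrite /xibar /xi sumrB.
have e1 : Fk n - dn <= N1 * D.
  by rewrite -xiE; apply: le_trans (ler_norm _) (B1 _).
have e2 : - (c * (SF - P)) <= N2 * D.
  by rewrite -xibE; apply: le_trans (ler_norm _) _; rewrite normrN; exact: B2.
have e3 : c * (SF - Fk n * n'%:R) <= c * (T * D) by exact: ler_wpM2l.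
have e4 : 0 <= c * P by exact: mulr_ge0.
have key : n%:R * alpha * D ^+ 2 <= D * (N1 + N2 + c * T).
  have iden : c * (SF - Fk n * n'%:R) = c * SF - Fk n.
    by rewrite mulrBr mulrA [c * Fk n]mulrC -mulrA cn mulr1.
  rewrite iden in e3.
  move: core e1 e2 e3 e4; rewrite !mulrBr.
  set A1 := c * SF; set A2 := c * P; set A3 := c * (T * D).
  have -> : D * (N1 + N2 + c * T) = N1 * D + N2 * D + A3.
    by rewrite /A3; ring.
  set u := n%:R * alpha * D ^+ 2; set y1 := N1 * D; set y2 := N2 * D.
  lra.
have na : 0 < n%:R * alpha by rewrite mulr_gt0 // ltr0n.
set K := N1 + N2 + c * T in key.
have K0 : 0 <= K by rewrite /K !addr_ge0 // mulr_ge0.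
have hD : D * (n%:R * alpha) <= K.
  have [D0|Dp] := eqVneq D 0; first by rewrite D0 mul0r.
  have Dpos : 0 < D by rewrite lt_neqAle eq_sym Dp normr_ge0.
  rewrite -(ler_pM2l Dpos); apply: le_trans key.
  by rewrite le_eqVlt; apply/orP; left; apply/eqP; ring.
have -> : beta / alpha * Savg x n / n%:R + (n%:R * alpha)^-1 * (N1 + N2)
   = K / (n%:R * alpha).
  rewrite /K -SavgE; field.
  by rewrite pnatr_eq0 gt_eqF.
by rewrite ler_pdivlMr.
Qed.
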